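(* The three families of test equations for nilpotent algebra presentations are irredundant: for each $t\in\{1,2,3\}$ there exists a nilpotent presentation over $\mathbb Z$ for which some test equation of type (T$t$) fails while all test equations of the other two types hold, where, with $w$ the weight function and $d=\max_iw(a_i)$, the types are (T1) $c(a_k\,c(a_ja_i))=c(c(a_ka_j)\,a_i)$ for $w(a_k)+w(a_j)+w(a_i)\le d$; (T2) $c(r_j\,c(a_ja_i))=c(c(r_ja_j)\,a_i)$ for $r_j<\infty$, $w(a_j)+w(a_i)\le d$; (T3) $c(r_i\,c(a_ja_i))=c(a_j\,c(r_ia_i))$ for $r_i<\infty$, $w(a_j)+w(a_i)\le d$. In particular, no proper subset of these families suffices to detect inconsistency in general.
   Context: $R$ is a field or $\mathbb Z$; algebras are associative, not necessarily unital. A nilpotent presentation over $R$ on generators $a_1,\ldots,a_n$ consists of $r_1,\ldots,r_n\in\mathbb N\cup\{\infty\}$ (all $\infty$ when $R$ is a field) and $e_{i,k},b_{i,j,k}\in R$ with $0\le e_{i,k},b_{i,j,k}<r_k$ when $r_k<\infty$, with defining relations $r_ia_i=\sum_{k>i}e_{i,k}a_k$ (for $r_i<\infty$) and $a_ja_i=\sum_{k>\max\{i,j\}}b_{i,j,k}a_k$ for all $1\le i,j\le n$. $F$ is the free associative $R$-algebra on $a_1,\ldots,a_n$ and $I$ the ideal generated by the differences of the two sides of the relations; the presented algebra is $F/I$. A reduced form is $x_1a_1+\cdots+x_na_n$ with $x_i\in R$, $0\le x_i<r_i$ when $r_i<\infty$. The collection function $c\colon F\to F$ maps each element to a reduced form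 congruent to it modulo $I$, computed by the collection algorithm (using linearity, rewriting products $a_ja_i$ by the right-hand sides of the product relations, and reducing coefficients via the relations $r_ia_i=\ldots$). The presentation is consistent if every element of $F/I$ has exactly one reduced form. The weight function $w$ is the pointwise minimal function $\{a_1,\ldots,a_n\}\to\mathbb N$ with $w(a_k)\ge w(a_i)$ when $e_{i,k}\ne0$ and $w(a_k)\ge w(a_i)+w(a_j)$ when $b_{i,j,k}\ne0$. *)

(* Defs.v *)
From mathcomp Require Import all_boot all_order all_algebra.
Set Implicit Arguments. Unset Strict Implicit. Unset Printing Implicit Defensive.
Import Order.TTheory GRing.Theory Num.Theory.
Local Open Scope ring_scope.

(* A nilpotent presentation over Z on generators a_0,...,a_{n-1}
   (0-based indices).  r i = None means r_i = infinity, r i = Some m means r_i = m.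
   e i k : coefficient in  r_i a_i = sum_{k>i} e_{i,k} a_k.
   b i j k : coefficient in  a_j a_i = sum_{k>max(i,j)} b_{i,j,k} a_k. *)
Record pres (n : nat) := Pres {
  pr_r : 'I_n -> option nat;
  pr_e : 'I_n -> 'I_n -> int;
  pr_b : 'I_n -> 'I_n -> 'I_n -> int }.

Definition valid_pres n (P : pres n) : Prop :=
  [/\ (forall (i : 'I_n) m, pr_r P i = Some m -> (0 < m)%N),
      (forall i k : 'I_n, (k <= i)%N -> pr_e P i k = 0),
      (forall i j k : 'I_n, (k <= maxn i j)%N -> pr_b P i j k = 0),
      (forall (i k : 'I_n) m, pr_r P k = Some m -> 0 <= pr_e P i k /\ pr_e P i k < m%:Z)
    & (forall (i j k : 'I_n) m, pr_r P k = Some m -> 0 <= pr_b P i j k /\ pr_b P i j k < m%:Z)].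

(* Elements of the free algebra F of degree <= 2:  a linear part
   sum_m lin m * a_m  plus a quadratic part  sum_{j,i} quad j i * a_j a_i. *)
Record F2 (n : nat) := MkF2 {
  lin : {ffun 'I_n -> int};
  quad : {ffun 'I_n -> 'I_n -> int} }.

Definition reduced_vec n := {ffun 'I_n -> int}.

Definition reduce_step n (P : pres n) (x : reduced_vec n) (i : 'I_n) : reduced_vec n :=
  match pr_r P i with
  | None => x
  | Some m =>
      let q := (x i %/ m%:Z)%Z in
      [ffun k => if k == i then (x i %% m%:Z)%Z else x k + q * pr_e P i k]
  end.

Definition reduce n (P : pres n) (x : reduced_vec n) : reduced_vec n :=
  foldl (reduce_step P) x (enum 'I_n).

Definition collect n (P : pres n) (f : F2 n) : reduced_vec n :=
  reduce P [ffun k => lin f k + \sum_(j < n) \sum_(i < n) quad f j i * pr_b P i j k].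

Definition linF n (x : reduced_vec n) : F2 n := MkF2 x [ffun _ => fun _ => 0].
Definition genv n (i : 'I_n) : reduced_vec n := [ffun m => (m == i)%:Z].
Definition prod_gg n (j i : 'I_n) : F2 n :=
  MkF2 [ffun _ => 0] [ffun j' => fun i' => ((j' == j) && (i' == i))%:Z].
Definition prod_gl n (j : 'I_n) (x : reduced_vec n) : F2 n :=
  MkF2 [ffun _ => 0] [ffun j' => fun m => (j' == j)%:Z * x m].
Definition prod_lg n (x : reduced_vec n) (i : 'I_n) : F2 n :=
  MkF2 [ffun _ => 0] [ffun m => fun i' => x m * (i' == i)%:Z].
Definition scal_l n (z : int) (x : reduced_vec n) : F2 n :=
  linF [ffun m => z * x m].

Definition weight_ok n (P : pres n) (w : 'I_n -> nat) : Prop :=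
  [/\ (forall i, (1 <= w i)%N),
      (forall i k, pr_e P i k != 0 -> (w i <= w k)%N)
    & (forall i j k, pr_b P i j k != 0 -> (w i + w j <= w k)%N)].

Definition is_weight n (P : pres n) (w : 'I_n -> nat) : Prop :=
  weight_ok P w /\ (forall f, weight_ok P f -> forall i, (w i <= f i)%N).

Definition maxw n (w : 'I_n -> nat) : nat := \max_(i < n) w i.

Definition T1_holds n (P : pres n) (w : 'I_n -> nat) : Prop :=
  forall i j k : 'I_n, (w k + w j + w i <= maxw w)%N ->
    collect P (prod_gl k (collect P (prod_gg j i)))
    = collect P (prod_lg (collect P (prod_gg k j)) i).

Definition T2_holds n (P : pres n) (w : 'I_n -> nat) : Prop :=
  forall (i j : 'I_n) (m : nat), pr_r P j = Some m -> (w j + w i <= maxw w)%N ->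
    collect P (scal_l m%:Z (collect P (prod_gg j i)))
    = collect P (prod_lg (collect P (scal_l m%:Z (genv j))) i).

Definition T3_holds n (P : pres n) (w : 'I_n -> nat) : Prop :=
  forall (i j : 'I_n) (m : nat), pr_r P i = Some m -> (w j + w i <= maxw w)%N ->
    collect P (scal_l m%:Z (collect P (prod_gg j i)))
    = collect P (prod_gl j (collect P (scal_l m%:Z (genv i)))).

(* Main.v *)
Require Import Defs.
From mathcomp Require Import all_boot all_order all_algebra.
From mathcomp Require Import zify.
Set Implicit Arguments. Unset Strict Implicit. Unset Printing Implicit Defensive.
Import Order.TTheory GRing.Theory Num.Theory.
Local Open Scope ring_scope.

Definition o0 : 'I_3 := @Ordinal 3 0 isT.
Definition o1 : 'I_3 := @Ordinal 3 1 isT.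
Definition o2 : 'I_3 := @Ordinal 3 2 isT.

Lemma ord3P (Q : 'I_3 -> Prop) : Q o0 -> Q o1 -> Q o2 -> forall i, Q i.
Proof.
move=> h0 h1 h2 [[|[|[|m]]] Hm].
- by rewrite (_ : Ordinal Hm = o0) //; apply: val_inj.
- by rewrite (_ : Ordinal Hm = o1) //; apply: val_inj.
- by rewrite (_ : Ordinal Hm = o2) //; apply: val_inj.
- by [].
Qed.

Ltac ords := let i := fresh "i" in intro i; pattern i; revert i; apply: ord3P.

Lemma enum3 : enum 'I_3 = [:: o0; o1; o2].
Proof. by apply: (inj_map val_inj); rewrite val_enum_ord. Qed.

Definition sum3 (F : 'I_3 -> int) : int :=
  F ord0 + (F (lift ord0 ord0) + (F (lift ord0 (lift ord0 ord0)) + 0)).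
Lemma sum3E F : \sum_(j < 3) F j = sum3 F.
Proof. by rewrite !big_ord_recl big_ord0. Qed.

Lemma sum3_ext F G : (forall j, F j = G j) -> sum3 F = sum3 G.
Proof. by move=> H; rewrite /sum3 !H. Qed.

Definition stepF (P : pres 3) (x : 'I_3 -> int) (i : 'I_3) : 'I_3 -> int :=
  match pr_r P i with
  | None => x
  | Some m => fun k => if k == i then (x i %% m%:Z)%Z else x k + (x i %/ m%:Z)%Z * pr_e P i k
  end.

Definition collectC (P : pres 3) (q : 'I_3 -> 'I_3 -> int) (l : 'I_3 -> int) : 'I_3 -> int :=
  foldl (stepF P) (fun k => l k + sum3 (fun j => sum3 (fun i => q j i * pr_b P i j k)))
    [:: o0; o1; o2].

Lemma foldl_red (P : pres 3) s (x : reduced_vec 3) (y : 'I_3 -> int) :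
  (forall k, x k = y k) -> forall k, foldl (reduce_step P) x s k = foldl (stepF P) y s k.
Proof.
elim: s x y => [|a s IH] x y H k /=; first exact: H.
apply: IH => k'; rewrite /reduce_step /stepF; case: (pr_r P a) => [m|]; last exact: H.
by rewrite ffunE !H.
Qed.

Lemma collectE (P : pres 3) f q l : (forall j i, quad f j i = q j i) -> (forall k, lin f k = l k) ->
  forall k, collect P f k = collectC P q l k.
Proof.
move=> Hq Hl k; rewrite /collect /reduce enum3 /collectC; apply: foldl_red => k'.
rewrite ffunE Hl sum3E; congr (_ + _); apply: sum3_ext => j.
rewrite sum3E; apply: sum3_ext => i; by rewrite Hq.
Qed.

Lemma L_gg (P : pres 3) (j i : 'I_3) k :
  collect P (prod_gg j i) k =
  collectC P (fun j' i' => ((j' == j) && (i' == i))%:Z) (fun _ => 0) k.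
Proof. by apply: collectE => *; rewrite /= ffunE. Qed.

Lemma L_gl (P : pres 3) (j : 'I_3) (x : reduced_vec 3) (xf : 'I_3 -> int) : (forall m, x m = xf m) -> forall k,
  collect P (prod_gl j x) k =
  collectC P (fun j' m => (j' == j)%:Z * xf m) (fun _ => 0) k.
Proof. by move=> H; apply: collectE => *; rewrite /= ffunE ?H. Qed.

Lemma L_lg (P : pres 3) (x : reduced_vec 3) (i : 'I_3) (xf : 'I_3 -> int) : (forall m, x m = xf m) -> forall k,
  collect P (prod_lg x i) k =
  collectC P (fun m i' => xf m * (i' == i)%:Z) (fun _ => 0) k.
Proof. by move=> H; apply: collectE => *; rewrite /= ffunE ?H. Qed.

Lemma L_sc (P : pres 3) (z : int) (x : reduced_vec 3) (xf : 'I_3 -> int) : (forall m, x m = xf m) -> forall k,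
  collect P (scal_l z x) k =
  collectC P (fun _ _ => 0) (fun m => z * xf m) k.
Proof. by move=> H; apply: collectE => *; rewrite /= ffunE ?H. Qed.

Lemma L_genv (i : 'I_3) m : genv i m = (m == i)%:Z.
Proof. by rewrite ffunE. Qed.

Ltac ev := lazymatch goal with
  | |- @eq _ (@fun_of_fin _ _ _ (genv _) _) _ => apply: L_genv
  | |- @eq _ (@fun_of_fin _ _ _ (@collect _ _ (prod_gg _ _)) _) _ => apply: L_gg
  | |- @eq _ (@fun_of_fin _ _ _ (@collect _ _ (prod_gl _ _)) _) _ => eapply L_gl; [let m := fresh "m" in intro m; ev]
  | |- @eq _ (@fun_of_fin _ _ _ (@collect _ _ (prod_lg _ _)) _) _ => eapply L_lg; [let m := fresh "m" in intro m; ev]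
  | |- @eq _ (@fun_of_fin _ _ _ (@collect _ _ (scal_l _ _)) _) _ => eapply L_sc; [let m := fresh "m" in intro m; ev]
  end.

Lemma neq_via (a b a' b' : int) : a = a' -> b = b' -> a' != b' -> a <> b.
Proof. by move=> -> -> /eqP. Qed.

Ltac ceq := apply/ffunP; ords;
  (etransitivity; [ev | symmetry; etransitivity; [ev | vm_compute; reflexivity]]).

Ltac cneq k := let E := fresh "E" in move=> E; move: (congr1 (fun f : reduced_vec 3 => f k) E); clear E; eapply neq_via; [ev | ev | vm_compute; reflexivity].

Definition P1 : pres 3 := Pres (fun _ => None) (fun _ _ => 0%R)
  (fun i j k => if [&& val i == 0%N, val j == 0%N & val k == 1%N] then 1%R
                else if [&& val i == 0%N, val j == 1%N & val k == 2%N] then 1%R else 0%R).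
Definition w1 (i : 'I_3) : nat := nth 0%N [:: 1; 2; 3]%N i.

Definition P2 : pres 3 := Pres (fun i => if val i == 0%N then Some 2%N else None)
  (fun i k => if (val i == 0%N) && (val k == 1%N) then 1%R else 0%R)
  (fun i j k => if [&& val i == 0%N, val j == 1%N & val k == 2%N] then 1%R
                else if [&& val i == 1%N, val j == 1%N & val k == 2%N] then 2%R else 0%R).
Definition P3 : pres 3 := Pres (fun i => if val i == 0%N then Some 2%N else None)
  (fun i k => if (val i == 0%N) && (val k == 1%N) then 1%R else 0%R)
  (fun i j k => if [&& val i == 1%N, val j == 0%N & val k == 2%N] then 1%R
                else if [&& val i == 1%N, val j == 1%N & val k == 2%N] then 2%R else 0%R).
Definition w2 (i : 'I_3) : nat := nth 0%N [:: 1; 1; 2]%N i.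

Lemma maxw1 : maxw w1 = 3%N. Proof. by rewrite /maxw !big_ord_recl big_ord0. Qed.
Lemma maxw2 : maxw w2 = 2%N. Proof. by rewrite /maxw !big_ord_recl big_ord0. Qed.

Lemma ex1 : valid_pres P1 /\ is_weight P1 w1 /\
      ~ T1_holds P1 w1 /\ T2_holds P1 w1 /\ T3_holds P1 w1.
Proof.
split; first split.
- by [].
- by [].
- by ords; ords; ords.
- by [].
- by [].
split.
  split; first split.
  + by ords.
  + by ords; ords.
  + by ords; ords; ords.
  move=> f [f1 _ f3]; have h0 := f1 o0.
  have h1 := f3 o0 o0 o1 isT. have h2 := f3 o0 o1 o2 isT.
  by ords; rewrite /w1 /=; lia.
split; last by split.
move=> H; move: (H o0 o0 o0); rewrite maxw1 => /(_ isT).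
cneq o2.
Qed.

Ltac tcase := let m := fresh "m" in let H := fresh "H" in let Hw := fresh "Hw" in
  intros m H; simpl in H;
  first [ discriminate H
        | injection H; intros <-; rewrite maxw2 /w2 /=; intro Hw;
          first [ discriminate Hw | ceq ] ].

Lemma ex2 : valid_pres P2 /\ is_weight P2 w2 /\
      T1_holds P2 w2 /\ ~ T2_holds P2 w2 /\ T3_holds P2 w2.
Proof.
split; first split.
- by ords => m //= [<-].
- by ords; ords.
- by ords; ords; ords.
- by ords; ords => m //= [<-].
- by ords; ords; ords => m //= [<-].
split.
  split; first split.
  + by ords.
  + by ords; ords.
  + by ords; ords; ords.
  move=> f [f1 _ f3]; have h0 := f1 o0. have h1 := f1 o1.
  have h2 := f3 o0 o1 o2 isT.
  by ords; rewrite /w2 /=; lia.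
split.
  by ords; ords; ords; rewrite maxw2.
split.
  move=> H; move: (H o0 o0 2%N erefl); rewrite maxw2 => /(_ isT).
  cneq o2.
ords; ords; tcase.
Qed.

Lemma ex3 : valid_pres P3 /\ is_weight P3 w2 /\
      T1_holds P3 w2 /\ T2_holds P3 w2 /\ ~ T3_holds P3 w2.
Proof.
split; first split.
- by ords => m //= [<-].
- by ords; ords.
- by ords; ords; ords.
- by ords; ords => m //= [<-].
- by ords; ords; ords => m //= [<-].
split.
  split; first split.
  + by ords.
  + by ords; ords.
  + by ords; ords; ords.
  move=> f [f1 _ f3]; have h0 := f1 o0. have h1 := f1 o1.
  have h2 := f3 o1 o0 o2 isT.
  by ords; rewrite /w2 /=; lia.
split.
  by ords; ords; ords; rewrite maxw2.
split.
  ords; ords; tcase.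
move=> H; move: (H o0 o0 2%N erefl); rewrite maxw2 => /(_ isT).
cneq o2.
Qed.

Theorem proposition27 :
  (exists (n : nat) (P : pres n) (w : 'I_n -> nat),
      valid_pres P /\ is_weight P w /\
      ~ T1_holds P w /\ T2_holds P w /\ T3_holds P w) /\
  (exists (n : nat) (P : pres n) (w : 'I_n -> nat),
      valid_pres P /\ is_weight P w /\
      T1_holds P w /\ ~ T2_holds P w /\ T3_holds P w) /\
  (exists (n : nat) (P : pres n) (w : 'I_n -> nat),
      valid_pres P /\ is_weight P w /\
      T1_holds P w /\ T2_holds P w /\ ~ T3_holds P w).
Proof.
split; first by exists 3%N, P1, w1; exact: ex1.
split; first by exists 3%N, P2, w2; exact: ex2.
by exists 3%N, P3, w2; exact: ex3.
Qed.
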